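(* Let $\mathbf{A}$ be a nonempty subset of $\mathbf{P}_{\mathbf{M}}$. Then the following are equivalent: (i) there exists a subclass $\mathbf{X}\subseteq\mathbf{M}$ with $\mathbf{P}_{\mathbf{X}}=\mathbf{A}$; (ii) $\mathbf{A}$ is a submonoid of $(\mathbf{F},\circ)$; (iii) $\mathbf{A}$ is a submonoid of $(\mathbf{P}_{\mathbf{M}},\circ)$.
   Context: All metric spaces are assumed to have nonempty underlying sets; $\mathbf{M}$ is the class of all metric spaces. $\mathbf{F}$ is the set of all functions $f:[0,\infty)\to[0,\infty)$, a monoid under composition with identity $\mathrm{id}(x)=x$; a submonoid is a subset closed under composition containing $\mathrm{id}$. For a class $\mathbf{X}$ of metric spaces, $\mathbf{P}_{\mathbf{X}}$ denotes the set of all $f\in\mathbf{F}$ such that for every metric space $(X,d)$, if $(X,d)\in\mathbf{X}$ then $(X,f\circ d)\in\mathbf{X}$ (where $f\circ d(x,y)=f(d(x,y))$; membership requires $f\circ d$ to be a metric). Thus $\mathbf{P}_{\mathbf{M}}$ is the set of metric preserving functions, i.e. those $f$ for which $f\circ d$ is a metric whenever $d$ is a metric. *)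

(* Defs.v *)
From Stdlib Require Import Reals.
Open Scope R_scope.

Definition Rnn : Type := { x : R | 0 <= x }.
Definition rval (x : Rnn) : R := proj1_sig x.

Definition Fun : Type := Rnn -> Rnn.
Definition idF : Fun := fun x => x.
Definition compF (f g : Fun) : Fun := fun x => f (g x).

Definition is_metric {X : Type} (d : X -> X -> Rnn) : Prop :=
  (forall x y, rval (d x y) = 0 <-> x = y) /\
  (forall x y, d x y = d y x) /\
  (forall x y z, rval (d x z) <= rval (d x y) + rval (d y z)).

(* A class of "spaces with a distance": a predicate on pairs (X, d). *)
Definition mclass : Type := forall X : Type, (X -> X -> Rnn) -> Prop.

Definition Mall : mclass := fun X d => inhabited X /\ is_metric d.

Definition subclass_of_M (C : mclass) : Prop :=
  forall X d, C X d -> Mall X d.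

Definition P (C : mclass) (f : Fun) : Prop :=
  forall X (d : X -> X -> Rnn), C X d -> C X (fun x y => f (d x y)).

Definition PM : Fun -> Prop := P Mall.

Definition submonoid_F (A : Fun -> Prop) : Prop :=
  A idF /\ (forall f g, A f -> A g -> A (compF f g)).

Definition submonoid_PM (A : Fun -> Prop) : Prop :=
  (forall f, A f -> PM f) /\ A idF /\ (forall f g, A f -> A g -> A (compF f g)).

(* Main.v *)
Require Import Defs.
From Stdlib Require Import Reals Lra Eqdep ProofIrrelevance FunctionalExtensionality.
Open Scope R_scope.

Definition dist (x y : Rnn) : Rnn := exist _ (Rabs (rval x - rval y)) (Rabs_pos _).

Lemma Rnn_eq (x y : Rnn) : rval x = rval y -> x = y.
Proof. destruct x, y; simpl; intros ->. f_equal; apply proof_irrelevance. Qed.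

Lemma Mall_dist : Mall Rnn dist.
Proof.
split. { constructor. exists 0; lra. }
split; [|split].
- intros x y; simpl; split.
  + intro H. apply Rnn_eq. destruct (Rcase_abs (rval x - rval y)).
    * rewrite Rabs_left in H; lra.
    * rewrite Rabs_right in H; lra.
  + intros ->. rewrite Rminus_diag, Rabs_R0; reflexivity.
- intros x y. apply Rnn_eq; simpl. apply Rabs_minus_sym.
- intros x y z; simpl.
  replace (rval x - rval z) with ((rval x - rval y) + (rval y - rval z)) by ring.
  apply Rabs_triang.
Qed.

Definition castR {X : Type} (p : X = Rnn) (x : X) : Rnn := eq_rect X (fun T => T) x Rnn p.

Definition Cls (A : Fun -> Prop) : mclass := fun X d =>
  Mall X d /\ exists (p : X = Rnn) f, A f /\
    forall x y, d x y = f (dist (castR p x) (castR p y)).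

Theorem mainTheorem8 (A : Fun -> Prop) :
  (exists f, A f) -> (forall f, A f -> PM f) ->
  ((exists C : mclass, subclass_of_M C /\ (forall f, P C f <-> A f))
     <-> submonoid_F A) /\
  (submonoid_F A <-> submonoid_PM A).
Proof.
  intros _ HPM. split; [split|split].
  - intros [C [HC HP]]. split.
    + apply HP. intros X d H. exact H.
    + intros f g Hf Hg. apply HP. apply HP in Hf. apply HP in Hg.
      intros X d H. apply (Hf X (fun x y => g (d x y))). apply Hg. exact H.
  - intros [Hid Hcomp]. exists (Cls A). split.
    + intros X d [H _]. exact H.
    + intro g. split.
      * intro Hg.
        assert (H0 : Cls A Rnn dist).
        { split. apply Mall_dist. exists eq_refl, idF. split. exact Hid.
          intros x y. reflexivity. }
        destruct (Hg _ _ H0) as [_ [p [f [Hf Heq]]]].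
        rewrite (UIP_refl _ _ p) in Heq.
        assert (E : g = f).
        { apply functional_extensionality. intro t.
          assert (Hz : 0 <= 0) by lra.
          specialize (Heq (exist _ 0 Hz) t).
          unfold castR in Heq; simpl in Heq.
          assert (D : dist (exist _ 0 Hz) t = t).
          { apply Rnn_eq. simpl. destruct t as [t Ht]; simpl.
            rewrite Rabs_minus_sym, Rminus_0_r. apply Rabs_right. lra. }
          rewrite D in Heq. exact Heq. }
        rewrite E; exact Hf.
      * intros Hg X d [HM [p [f [Hf Heq]]]]. split.
        -- apply (HPM g Hg). exact HM.
        -- exists p, (compF g f). split. apply Hcomp; assumption.
           intros x y. rewrite Heq. reflexivity.
  - intros [H1 H2]. split; [exact HPM|split; assumption].
  - intros [_ [H1 H2]]. split; assumption.
Qed.
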